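(* Let $T$ be a tree with $n$ vertices. Then \[ \mathcal{V}_2^*(T^\ell,n-1)=\big\{E(P_{u,v})\cup\{ww\mid w\notin V(P_{u,v})\}\;\big|\; u\neq v \text{ are leaves of } T\big\}, \] where $P_{u,v}$ is the unique path in $T$ joining $u$ and $v$.
   Context: A $2$-matching of a graph (loops allowed) is a set $\mathcal{M}$ of edges such that every vertex is incident to at most two edges of $\mathcal{M}$ (a loop counts twice for incidence but as one edge). $T^\ell$ is $T$ with a loop $ww$ added at each vertex $w$; $\ell(\mathcal{M})$ is the set of loops in $\mathcal{M}$. A $2$-matching $\mathcal{M}$ of $T^\ell$ is minimal if there is no $2$-matching $\mathcal{M}'$ of $T^\ell$ with $|\mathcal{M}'|=|\mathcal{M}|$ and $\ell(\mathcal{M}')\subsetneq\ell(\mathcal{M})$; $\mathcal{V}_2^*(T^\ell,j)$ is the set of minimal $2$-matchings of $T^\ell$ with exactly $j$ edges. *)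

(* Defs.v *)
From mathcomp Require Import all_boot.
Set Implicit Arguments. Unset Strict Implicit. Unset Printing Implicit Defensive.

(* Tree: simple, connected and acyclic (no simple cycle of length >= 3). *)
Definition simple_graph (V : finType) (e : rel V) : Prop :=
  irreflexive e /\ symmetric e.

Definition has_cycle (V : finType) (e : rel V) : Prop :=
  exists (x : V) (p : seq V),
    [/\ 2 <= size p, path e x p, e (last x p) x & uniq (x :: p)].

Definition is_tree (V : finType) (e : rel V) : Prop :=
  [/\ simple_graph e, (forall x y : V, connect e x y) & ~ has_cycle e].

Definition leaf (V : finType) (e : rel V) (x : V) : bool :=
  #|[set y | e x y]| == 1.

(* Edges of T^l are represented as vertex sets: the loop ww is [set w],
   a tree edge xy is [set x; y]. *)
Definition tree_edge (V : finType) (e : rel V) (f : {set V}) : bool :=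
  [exists x, exists y, e x y && (f == [set x; y])].

Definition loop_edge (V : finType) (f : {set V}) : bool :=
  [exists w, f == [set w]].

Definition edge_Tl (V : finType) (e : rel V) (f : {set V}) : bool :=
  loop_edge f || tree_edge e f.

Definition incidence (V : finType) (M : {set {set V}}) (w : V) : nat :=
  \sum_(f in M | w \in f) (if #|f| == 1 then 2 else 1).

Definition two_matching (V : finType) (e : rel V) (M : {set {set V}}) : bool :=
  [forall f in M, edge_Tl e f] && [forall w, incidence M w <= 2].

Definition loops (V : finType) (M : {set {set V}}) : {set {set V}} :=
  [set f in M | loop_edge f].

Definition minimal_two_matching (V : finType) (e : rel V) (M : {set {set V}})
  : Prop :=
  two_matching e M /\
  ~ (exists M' : {set {set V}},
        [/\ two_matching e M', #|M'| = #|M| & loops M' \proper loops M]).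

Definition V2star (V : finType) (e : rel V) (j : nat) (M : {set {set V}})
  : Prop :=
  minimal_two_matching e M /\ #|M| = j.

(* p is a (simple) path in T from u to v, given as u :: p *)
Definition simple_path (V : finType) (e : rel V) (u v : V) (p : seq V) : bool :=
  [&& path e u p, last u p == v & uniq (u :: p)].

Definition path_edges (V : finType) (u : V) (p : seq V) : {set {set V}} :=
  [set [set x.1; x.2] | x in zip (u :: p) p].

Definition loops_off (V : finType) (u : V) (p : seq V) : {set {set V}} :=
  [set [set w] | w : V & w \notin u :: p].

(* Main.v *)
Require Import Defs.
From mathcomp Require Import all_boot zify.
From Stdlib Require Import Lia Classical.
Set Implicit Arguments. Unset Strict Implicit. Unset Printing Implicit Defensive.

Section Gen.
Variable V : finType.

Lemma rev_simple (r : rel V) (rs : symmetric r) (u : V) (p : seq V) :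
  path r u p -> uniq (u :: p) ->
  exists p', [/\ path r (last u p) p', uniq (last u p :: p'),
     last (last u p) p' = u, size p' = size p & (last u p :: p') =i (u :: p)].
Proof.
move=> pp up; exists (rev (belast u p)).
have E : last u p :: rev (belast u p) = rev (u :: p).
  by rewrite [u :: p]lastI rev_rcons.
split.
- rewrite rev_path; apply: sub_path pp => x y; by rewrite rs.
- by rewrite E rev_uniq.
- have -> : last (last u p) (rev (belast u p)) = last u (last u p :: rev (belast u p)) by [].
  by rewrite E rev_cons last_rcons.
- by rewrite size_rev size_belast.
- by move=> w; rewrite E mem_rev.
Qed.
End Gen.

Section Tree.
Variables (V : finType) (e : rel V).
Hypothesis eirr : irreflexive e.
Hypothesis esym : symmetric e.
Hypothesis nocyc : ~ has_cycle e.

Lemma no_chord z t y : path e z t -> uniq (z :: t) -> y \in t -> e y z ->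
  y = head z t.
Proof.
move=> pt ut yt eyz; case/splitPr: yt pt ut => t1 t2.
case: t1 => [|x t1]; first by [].
move=> pt ut.
exfalso; apply: nocyc; exists z, (rcons (x :: t1) y); split.
- by rewrite size_rcons.
- move: pt; rewrite rcons_path cat_path => /andP[-> /=].
  by case/andP.
- by rewrite last_rcons.
- move: ut; rewrite -cat_rcons cons_uniq => /andP[zn u].
  rewrite cons_uniq; apply/andP; split.
    by apply: contra zn; rewrite mem_cat => ->.
  by move: u; rewrite cat_uniq => /andP[].
Qed.

Lemma path_uniqT p : forall u q, path e u p -> uniq (u :: p) ->
  path e u q -> uniq (u :: q) -> last u p = last u q -> p = q.
Proof.
elim: p => [|x p IH] u [|y q] //=.
- move=> _ _ _ /andP[uq _] lq.
  by move: uq; rewrite lq mem_last.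
- move=> _ /andP[up _] _ _ lp.
  by move: up; rewrite -lp mem_last.
move=> /andP[eux px] /andP[uxp uxp'] /andP[euy qy] /andP[uyq uyq'] lpq.
have [exy|xy] := eqVneq x y.
  by subst y; rewrite (IH x q).
exfalso.
have xq : x \notin y :: q.
  apply/negP => xq.
  have := no_chord (z := u) (t := y :: q) (y := x).
  rewrite /= euy qy uyq uyq' esym eux => /(_ erefl erefl xq erefl) /eqP.
  by rewrite (negbTE xy).
have := IH x (u :: y :: q) px uxp'.
have -> : path e x (u :: y :: q) by rewrite /= esym eux euy.
have -> : uniq [:: x, u, y & q].
  rewrite /= uyq uyq' andbT andbC /=; rewrite inE negb_or xq andbT.
  by apply: contra uxp; rewrite eq_sym => /eqP ->; rewrite inE eqxx.
move=> /(_ erefl erefl lpq) pe.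
by move: uxp; rewrite pe !inE eqxx orbT.
Qed.
End Tree.

Section Sets.
Variables (V : finType).

Lemma zip_rel (r : rel V) u p a b : path r u p -> (a, b) \in zip (u :: p) p -> r a b.
Proof.
elim: p u => [|x p IH] u //= /andP[rux pp]; rewrite inE => /orP[/eqP[-> ->]//|].
exact: IH.
Qed.

Lemma zip_mem (u : V) p (a b : V) : (a, b) \in zip (u :: p) p -> (a \in u :: p) /\ (b \in u :: p).
Proof.
elim: p u => [|x p IH] u //=; rewrite inE => /orP[/eqP[-> ->]|].
  by rewrite !inE !eqxx orbT.
by move/IH => [] ha hb; split; rewrite in_cons ?ha ?hb orbT.
Qed.

Lemma PE_cons (u x : V) p : path_edges u (x :: p) = [set u; x] |: path_edges x p.
Proof.
apply/setP => f; rewrite /path_edges /= !inE.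
apply/imsetP/orP.
  case=> [[a b]]; rewrite inE => /orP[/eqP[-> ->] -> | ab ->]; first by left.
  by right; apply/imsetP; exists (a, b).
case=> [/eqP ->|/imsetP[[a b] ab ->]]; first by exists (u, x); rewrite ?inE ?eqxx.
by exists (a, b); rewrite // inE ab orbT.
Qed.

Lemma PE_nil (u : V) : path_edges u [::] = set0.
Proof. by apply/setP => f; rewrite /path_edges inE; apply/imsetP => -[x]. Qed.

Lemma PE_vert (u : V) p f w : f \in path_edges u p -> w \in f -> w \in u :: p.
Proof.
case/imsetP => [[a b] /zip_mem [ha hb] ->]; rewrite !inE /=.
by case/orP => /eqP ->.
Qed.

Lemma PE_edge (r : rel V) u p f : path r u p -> f \in path_edges u p ->
  exists a b, r a b /\ f = [set a; b].
Proof.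
move=> pp /imsetP [[a b] ab ->]; exists a, b; split => //.
exact: zip_rel pp ab.
Qed.

Variable e : rel V.
Hypothesis eirr : irreflexive e.

Lemma PE_card u p : path e u p -> uniq (u :: p) -> #|path_edges u p| = size p.
Proof.
elim: p u => [|x p IH] u; first by rewrite PE_nil cards0.
move=> /= /andP[eux pp] /andP[up uq].
rewrite PE_cons cardsU1 IH //.
suff -> : [set u; x] \notin path_edges x p by [].
apply/negP => /PE_vert /(_ (set21 u x)) ux.
by move: up; rewrite ux.
Qed.

Lemma PE_cnt u p w : path e u p -> uniq (u :: p) ->
  #|[set f in path_edges u p | w \in f]| <= (if w == u then 1 else 2).
Proof.
elim: p u => [|x p IH] u.
  by rewrite PE_nil; move=> _ _; rewrite (_ : [set f in set0 | _] = set0) ?cards0 //;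
     apply/setP => f; rewrite !inE.
move=> /= /andP[eux pp] /andP[up uq].
rewrite PE_cons.
have -> : [set f in [set u; x] |: path_edges x p | w \in f] =
   (if w \in [set u; x] then [set [set u; x]] else set0) :|: [set f in path_edges x p | w \in f].
  apply/setP => f; rewrite !inE; case: ifP => H; rewrite ?inE;
  case: (f =P [set u; x]) => [->|_]; rewrite ?eqxx ?H //=; rewrite ?andbF ?orbF ?inE ?H //; by case: (_ \in path_edges x p).
have Hx := IH x pp uq.
case: (w =P u) => [->|wu].
  rewrite (_ : [set f in path_edges x p | u \in f] = set0).
    by rewrite setU0 in_set2 eqxx cards1.
  apply/setP => f; rewrite !inE; apply/negP => /andP[/PE_vert H /H ux].
  by move: up; rewrite ux.
apply: (leq_trans (leq_card_setU _ _)).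
case: (w =P x) Hx => [wx0|wx] Hx.
  subst w; rewrite ?eqxx in Hx.
  by rewrite in_set2 eqxx orbT cards1 add1n ltnS.
rewrite in_set2; move/eqP/negbTE: wu => ->; move/eqP/negbTE: wx => ->.
by rewrite cards0.
Qed.
End Sets.

Section Inc.
Variables (V : finType) (e : rel V).
Hypothesis eirr : irreflexive e.
Hypothesis esym : symmetric e.

Definition wt (f : {set V}) := if #|f| == 1 then 2 else 1.
Definition Hm (M : {set {set V}}) x y := e x y && ([set x; y] \in M).

Lemma Hm_sym M : symmetric (Hm M).
Proof. by move=> x y; rewrite /Hm esym setUC. Qed.

Lemma Hm_e M x y : Hm M x y -> e x y.
Proof. by case/andP. Qed.

Lemma loopE (f : {set V}) : loop_edge f = (#|f| == 1).
Proof.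
apply/existsP/cards1P => [[w /eqP ->]|[w ->]]; by exists w.
Qed.

Lemma incE M w : incidence M w = \sum_(f in [set f in M | w \in f]) wt f.
Proof. by apply: eq_bigl => f; rewrite inE. Qed.

Lemma sum_sub (A B : {set {set V}}) (F : {set V} -> nat) :
  A \subset B -> \sum_(f in A) F f <= \sum_(f in B) F f.
Proof.
move=> AB; rewrite [X in _ <= X](big_setID A) /= (setIidPr AB).
exact: leq_addr.
Qed.

Lemma classify (M : {set {set V}}) z f : two_matching e M -> f \in M -> z \in f ->
  f = [set z] \/ exists y, e z y /\ f = [set z; y].
Proof.
case/andP => /forallP /(_ f) /implyP Hf _ fM zf.
move: (Hf fM); rewrite /edge_Tl => /orP[/existsP[w /eqP fw]|/existsP[x /existsP[y /andP[exy /eqP fxy]]]].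
  by left; move: zf; rewrite fw inE => /eqP ->.
right; move: zf; rewrite fxy in_set2 => /orP[/eqP ->|/eqP ->].
  by exists y.
by exists x; rewrite esym setUC.
Qed.

Lemma inc_le2 (M : {set {set V}}) w : two_matching e M -> incidence M w <= 2.
Proof. by case/andP => _ /forallP. Qed.

Lemma inc_le1 (M : {set {set V}}) z h : two_matching e M -> [set z] \notin M -> z != h ->
  (forall y, Hm M z y -> y = h) -> incidence M z <= 1.
Proof.
move=> tm zM zh Hh; rewrite incE.
apply: leq_trans (sum_sub wt (B := [set [set z; h]]) _) _.
  apply/subsetP => f; rewrite inE => /andP[fM zf].
  case: (classify tm fM zf) => [fz|[y [ezy fy]]].
    by move: zM; rewrite -fz fM.
  rewrite inE fy (Hh y) //; by rewrite /Hm ezy -fy fM.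
by rewrite big_set1 /wt cards2 zh.
Qed.

Lemma inc_loop3 (M : {set {set V}}) (z h : V) : [set z] \in M -> [set z; h] \in M -> z != h ->
  3 <= incidence M z.
Proof.
move=> zM zhM zh; rewrite incE.
apply: leq_trans (sum_sub wt (A := [set z] |: [set [set z; h]]) _).
  rewrite big_setU1 ?big_set1 /wt ?cards1 ?cards2 ?zh //.
  rewrite inE; apply/negP => /eqP/setP/(_ h); rewrite !inE eqxx orbT.
  by rewrite eq_sym (negbTE zh).
apply/subsetP => f; rewrite !inE => /orP[] /eqP ->; rewrite ?zM ?zhM !inE eqxx //.
Qed.

Lemma inc_0 (M : {set {set V}}) z : two_matching e M -> [set z] \notin M ->
  (forall y, ~~ Hm M z y) -> incidence M z = 0.
Proof.
move=> tm zM nH; rewrite incE.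
rewrite (_ : [set f in M | z \in f] = set0) ?big_set0 //.
apply/setP => f; rewrite !inE; apply/negP => /andP[fM zf].
case: (classify tm fM zf) => [fz|[y [ezy fy]]].
  by move: zM; rewrite -fz fM.
by move: (nH y); rewrite /Hm ezy -fy fM.
Qed.

Lemma inc_pos (M : {set {set V}}) z : two_matching e M -> [set z] \notin M ->
  0 < incidence M z -> exists y, Hm M z y.
Proof.
move=> tm zM; case: (boolP [exists y, Hm M z y]) => [/existsP //|/existsPn H].
by rewrite inc_0.
Qed.

Lemma handshake (M : {set {set V}}) : two_matching e M ->
  \sum_w incidence M w = 2 * #|M|.
Proof.
move=> tm.
rewrite /incidence.
under eq_bigr => w _ do rewrite big_mkcond /=.
rewrite exchange_big /=.
rewrite [RHS](_ : _ = \sum_(f in M) 2); last by rewrite sum_nat_const mulnC.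
rewrite [RHS]big_mkcond /=; apply: eq_bigr => f _.
case: (boolP (f \in M)) => fM /=; last by rewrite big1.
rewrite -big_mkcond /= sum_nat_const.
move: tm => /andP[/forallP /(_ f) /implyP /(_ fM) Hf _].
move: Hf; rewrite /edge_Tl => /orP[/existsP[w /eqP ->]|/existsP[x /existsP[y /andP[exy /eqP ->]]]].
  by rewrite cards1.
rewrite cards2; have -> : x != y by apply: contraTneq exy => ->; rewrite eirr.
by [].
Qed.

Lemma deficit (M : {set {set V}}) (S : {set V}) k : two_matching e M ->
  (forall w, w \in S -> incidence M w + k <= 2) ->
  2 * #|M| + k * #|S| <= 2 * #|V|.
Proof.
move=> tm HS; rewrite -handshake //.
have -> : k * #|S| = \sum_w (if w \in S then k else 0).
  by rewrite -big_mkcond sum_nat_const mulnC.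
have -> : 2 * #|V| = \sum_(w : V) 2 by rewrite sum_nat_const mulnC.
rewrite -big_split; apply: leq_sum => w _ /=.
case: ifP => [/HS //| _]; rewrite addn0; exact: inc_le2.
Qed.
End Inc.

Section Conv.
Variables (V : finType) (e : rel V).
Hypothesis eirr : irreflexive e.
Hypothesis esy : symmetric e.

Lemma LO_mem (u : V) p f : (f \in loops_off u p) = [exists w, (w \notin u :: p) && (f == [set w])].
Proof.
apply/imsetP/existsP => [[w]|[w /andP[wn /eqP ->]]]; last by exists w; rewrite ?inE.
by rewrite inE => wn ->; exists w; rewrite wn eqxx.
Qed.

Lemma LO_card (u : V) p : uniq (u :: p) -> #|loops_off u p| = #|V| - (size p).+1.
Proof.
move=> up; rewrite card_imset; last exact: set1_inj.
have := cardC (mem (u :: p)); rewrite (card_uniqP up) /= => <-.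
rewrite addKn; apply: eq_card => w; by rewrite !inE.
Qed.

Lemma size_le (u : V) p : uniq (u :: p) -> (size p).+1 <= #|V|.
Proof. by move=> up; have := max_card (mem (u :: p)); rewrite (card_uniqP up). Qed.

Lemma PE_card2 (u : V) p f : path e u p -> f \in path_edges u p -> #|f| = 2.
Proof.
move=> pp /(PE_edge pp) [a [b [eab ->]]]; rewrite cards2.
by have -> : a != b by apply: contraTneq eab => ->; rewrite eirr.
Qed.

Definition Aset (u : V) p := path_edges u p :|: loops_off u p.

Lemma A_loops (u : V) p : path e u p -> loops (Aset u p) = loops_off u p.
Proof.
move=> pp; apply/setP => f; rewrite !inE loopE.
case: (boolP (f \in path_edges u p)) => fP /=.
  rewrite (PE_card2 pp fP) /=; apply/esym/negP; rewrite LO_mem => /existsP[w /andP[_ /eqP fw]].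
  by move: (PE_card2 pp fP); rewrite fw cards1.
case: (boolP (f \in loops_off u p)) => // fL /=.
by move: fL; rewrite LO_mem => /existsP[w /andP[_ /eqP ->]]; rewrite cards1.
Qed.

Lemma A_card (u : V) p : path e u p -> uniq (u :: p) -> #|Aset u p| = #|V| - 1.
Proof.
move=> pp up; rewrite /Aset cardsU (PE_card pp up) LO_card //.
rewrite (_ : path_edges u p :&: loops_off u p = set0) ?cards0 ?subn0.
  have := size_le up; lia.
apply/setP => f; rewrite !inE; apply/negP => /andP[fP].
rewrite LO_mem => /existsP[w /andP[_ /eqP fw]].
by move: (PE_card2 pp fP); rewrite fw cards1.
Qed.

Lemma A_tm (u : V) p : path e u p -> uniq (u :: p) -> two_matching e (Aset u p).
Proof.
move=> pp up; apply/andP; split.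
  apply/forallP => f; apply/implyP; rewrite inE => /orP[fP|].
    move: (PE_edge pp fP) => [a [b [eab fab]]].
    by apply/orP; right; apply/existsP; exists a; apply/existsP; exists b; rewrite eab fab eqxx.
  rewrite LO_mem => /existsP[w /andP[_ /eqP fw]].
  by apply/orP; left; apply/existsP; exists w; rewrite fw.
apply/forallP => w; rewrite incE.
case: (boolP (w \in u :: p)) => wq.
  apply: leq_trans (@sum_sub V _ [set f in path_edges u p | w \in f] (@wt V) _) _.
    apply/subsetP => f; rewrite !inE => /andP[/orP[fP|fL] wf]; first by rewrite fP.
    move: fL; rewrite LO_mem => /existsP[w' /andP[w'n /eqP fw]].
    by move: wf; rewrite fw inE => /eqP wE; move: w'n; rewrite -wE wq.
  rewrite (eq_bigr (fun _ => 1)); last first.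
    by move=> f; rewrite inE => /andP[fP _]; rewrite /wt (PE_card2 pp fP).
  rewrite sum1_card; apply: leq_trans (PE_cnt w pp up) _.
  by case: ifP.
apply: leq_trans (@sum_sub V _ [set [set w]] (@wt V) _) _.
  apply/subsetP => f; rewrite !inE => /andP[/orP[fP|fL] wf].
    by move: wq; rewrite (PE_vert fP wf).
  move: fL; rewrite LO_mem => /existsP[w' /andP[w'n /eqP fw]].
  by move: wf; rewrite fw inE => /eqP ->.
by rewrite big_set1 /wt cards1.
Qed.
End Conv.

Lemma exmax (P : nat -> Prop) b : P 0 -> (forall k, P k -> k <= b) ->
  exists k, P k /\ forall j, P j -> j <= k.
Proof.
move=> P0 Pb; apply: NNPP => Hn.
have step : forall k, P k -> exists j, P j /\ k < j.
  move=> k Pk; apply: NNPP => Hk; apply: Hn; exists k; split => // j Pj.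
  rewrite leqNgt; apply/negP => kj; apply: Hk; by exists j.
have : forall m, exists k, P k /\ m <= k.
  elim=> [|m [k [Pk mk]]]; first by exists 0.
  case: (step k Pk) => j [Pj kj]; exists j; split => //; lia.
move=> /(_ b.+1) [k [Pk bk]]; have := Pb k Pk; lia.
Qed.

Section Struct.
Variables (V : finType) (e : rel V).
Hypothesis eirr : irreflexive e.
Hypothesis esy : symmetric e.
Hypothesis nocyc : ~ has_cycle e.
Variable M : {set {set V}}.
Hypothesis tm : two_matching e M.
Hypothesis cM : #|M| = #|V| - 1.
Hypothesis n0 : 0 < #|V|.

Notation H := (Hm e M).

Lemma Hirr : irreflexive H.
Proof. by move=> x; rewrite /Hm eirr. Qed.

Lemma def3 x1 x2 x3 : x1 != x2 -> x1 != x3 -> x2 != x3 ->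
  incidence M x1 <= 1 -> incidence M x2 <= 1 -> incidence M x3 <= 1 -> False.
Proof.
move=> d12 d13 d23 i1 i2 i3.
have := @deficit _ _ eirr M (x1 |: [set x2; x3]) 1 tm.
rewrite cardsU1 cards2 d23 in_set2 negb_or d12 d13 cM.
have : (forall w, w \in x1 |: [set x2; x3] -> incidence M w + 1 <= 2).
  move=> w; rewrite !inE => /orP[/eqP->|/orP[]/eqP->]; rewrite addn1 ltnS //.
move=> h /(_ h); lia.
Qed.

Definition maxpath w z t := [/\ path H z t, uniq (z :: t), w \in z :: t &
  forall z' t', path H z' t' -> uniq (z' :: t') -> w \in z' :: t' -> size t' <= size t].

Lemma maxpath_ex w : exists z t, maxpath w z t.
Proof.
pose P := fun k => exists z t, [/\ path H z t, uniq (z :: t), w \in z :: t & size t = k].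
have P0 : P 0 by exists w, [::]; rewrite /= inE eqxx.
have Pb : forall k, P k -> k <= #|V|.
  move=> k [z [t [_ ut _ <-]]]; have := size_le ut; lia.
have [k [[z [t [pt ut wt st]]] kmax]] := exmax P0 Pb.
exists z, t; split => // z' t' pt' ut' wt'; rewrite st; apply: kmax.
by exists z', t'.
Qed.

Lemma maxpath_end w z t y : maxpath w z t -> H z y -> y \in t /\ y = head z t.
Proof.
case=> pt ut wt mx Hzy.
have yq : y \in z :: t.
  apply: NNPP => yn; have := mx y (z :: t).
  rewrite /=.
  have h1 : H y z && path H z t by rewrite (Hm_sym esy) Hzy pt.
  have h2 : [&& y \notin z :: t, z \notin t & uniq t].
    move: ut; rewrite cons_uniq => /andP[u1 u2]; rewrite u1 u2 !andbT.
    by apply/negP.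
  have h3 : w \in [:: y, z & t] by rewrite inE wt orbT.
  by move=> /(_ h1 h2 h3); rewrite ltnn.
have yt : y \in t.
  move: yq; rewrite inE => /orP[/eqP yz|//]; by move: Hzy; rewrite yz Hirr.
split => //; apply: (no_chord nocyc (sub_path (@Hm_e _ _ M) pt) ut yt).
by rewrite esy; case/andP: Hzy.
Qed.

Lemma maxpath_nonnil w z t y : maxpath w z t -> H w y -> t != [::].
Proof.
move=> mp Hwy; apply/negP => /eqP t0.
case: (mp) => _ _ wt _; move: wt; rewrite t0 inE => /eqP wz; subst w.
by have [] := maxpath_end mp Hwy; rewrite t0.
Qed.

Lemma endpoint_inc w z t : maxpath w z t -> t != [::] ->
  [set z] \notin M /\ incidence M z <= 1.
Proof.
move=> mp; case: t mp => [//|h t] mp _.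
case: (mp) => pt _ _ _; move: pt => /= /andP[Hzh _].
have zh : z != h by apply: contraTneq Hzh => ->; rewrite Hirr.
have zM : [set z] \notin M.
  apply/negP => zM; have := inc_loop3 zM (proj2 (andP Hzh)) zh.
  by have := inc_le2 z tm; lia.
split => //; apply: (inc_le1 esy tm zM zh) => y Hzy.
by have [] := maxpath_end mp Hzy.
Qed.

Lemma maxpath_rev w z t : maxpath w z t -> exists t',
  [/\ maxpath w (last z t) t', last (last z t) t' = z,
      (last z t :: t') =i (z :: t) & size t' = size t].
Proof.
case=> pt ut wt mx.
have [t' [pt' ut' lt' st' et']] := rev_simple (Hm_sym esy M) pt ut.
exists t'; split => //; split => //.
  by rewrite et'.
by move=> z2 t2 p2 u2 w2; rewrite st'; exact: mx p2 u2 w2.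
Qed.

Lemma struct : exists u p, [/\ path e u p, uniq (u :: p) & M = Aset u p].
Proof.
case: (boolP [exists a, exists b, H a b]) => [/existsP[a /existsP[b Hab]]|noH].
  have [z [t mp]] := maxpath_ex a.
  have tn := maxpath_nonnil mp Hab.
  have [zM iz] := endpoint_inc mp tn.
  have [t' [mp' lt' et' st']] := maxpath_rev mp.
  have tn' : t' != [::] by rewrite -size_eq0 st' size_eq0.
  have [zM' iz'] := endpoint_inc mp' tn'.
  case: (mp) => pt ut _ _.
  have pe : path e z t := sub_path (@Hm_e _ _ M) pt.
  have z'q : last z t \in z :: t by exact: mem_last.
  have zz' : z != last z t.
    case: (t) tn ut => [//|h t0] _ /= /andP[zt _].
    by apply: contraNneq zt => ->; exact: mem_last.
  have claim : forall w, [set w] \notin M -> w \in z :: t.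
    move=> w wM; apply/negPn/negP => wq.
    have wz : z != w by apply: contraNneq wq => <-; rewrite inE eqxx.
    have wz' : last z t != w by apply: contraNneq wq => <-.
    have iw : 0 < incidence M w.
      rewrite lt0n; apply/negP => /eqP i0.
      by apply: (def3 zz' wz wz' iz iz'); rewrite i0.
    have [y Hwy] := inc_pos esy tm wM iw.
    have [z2 [t2 mp2]] := maxpath_ex w.
    have tn2 := maxpath_nonnil mp2 Hwy.
    have [_ iz2] := endpoint_inc mp2 tn2.
    have [t3 [mp3 lt3 et3 st3]] := maxpath_rev mp2.
    have tn3 : t3 != [::] by rewrite -size_eq0 st3 size_eq0.
    have [_ iz3] := endpoint_inc mp3 tn3.
    case: (mp2) => pt2 ut2 wt2 _; case: (mp3) => pt3 ut3 wt3 _.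
    have z23 : z2 != last z2 t2.
      case: (t2) tn2 ut2 => [//|h t0] _ /= /andP[zt _].
      by apply: contraNneq zt => ->; exact: mem_last.
    have hz : forall x, incidence M x <= 1 -> x = z \/ x = last z t.
      move=> x ix; case: (eqVneq x z) => [->|xz]; first by left.
      case: (eqVneq x (last z t)) => [->|xz']; first by right.
      by exfalso; apply: (def3 zz' _ _ iz iz' ix); rewrite eq_sym.
    have pe2 : path e z2 t2 := sub_path (@Hm_e _ _ M) pt2.
    have pe3 : path e (last z2 t2) t3 := sub_path (@Hm_e _ _ M) pt3.
    case: (hz _ iz2) => e2; case: (hz _ iz3) => e3.
    - by move: z23; rewrite e3 e2 eqxx.
    - subst z2.
      have := path_uniqT esy nocyc pe2 ut2 pe ut; rewrite e3 => /(_ erefl) tt.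
      by move: wq; rewrite -tt wt2.
    - have := path_uniqT esy nocyc pe3 ut3; rewrite e3 => /(_ _ pe ut).
      move: lt3; rewrite e3 => -> /(_ e2) tt.
      by move: wq; rewrite -tt -e3 et3 wt2.
    - by move: z23; rewrite e3 e2 eqxx.
  exists z, t; split => //.
  apply/eqP; rewrite eq_sym eqEcard; apply/andP; split.
    apply/subsetP => f; rewrite inE => /orP[fP|].
      have [x [y [Hxy ->]]] := PE_edge pt fP.
      by case/andP: Hxy.
    rewrite LO_mem => /existsP[w /andP[wq /eqP ->]].
    by apply/negPn/negP => /claim; rewrite (negbTE wq).
  by rewrite cM (A_card eirr pe ut).
have noH' : forall a b, ~~ H a b.
  by move=> a b; move/existsPn: noH => /(_ a) /existsPn /(_ b).
have [x xM] : exists x, [set x] \notin M.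
  case: (boolP [exists x, [set x] \notin M]) => [/existsP//|/existsPn allM].
  exfalso; have : #|[set [set w] | w : V]| <= #|M|.
    apply: subset_leq_card; apply/subsetP => f /imsetP[w _ ->].
    by move: (allM w); rewrite negbK.
  rewrite card_imset; last exact: set1_inj.
  by rewrite cM leqNgt ltn_subrL n0.
have ux : forall y, [set y] \notin M -> y = x.
  move=> y yM; apply/eqP/negPn/negP => yx.
  have := @deficit _ _ eirr M [set y; x] 2 tm.
  rewrite cards2 yx cM.
  have : forall w, w \in [set y; x] -> incidence M w + 2 <= 2.
    move=> w; rewrite in_set2 => /orP[]/eqP ->.
      by rewrite (inc_0 esy tm yM (noH' y)).
    by rewrite (inc_0 esy tm xM (noH' x)).
  move=> h /(_ h); lia.
exists x, [::]; split => //.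
apply/eqP; rewrite eq_sym eqEcard; apply/andP; split.
  apply/subsetP => f; rewrite inE PE_nil inE /= LO_mem => /existsP[w /andP[wq /eqP ->]].
  apply/negPn/negP => /ux wx; move: wq; by rewrite wx inE eqxx.
by rewrite cM (A_card eirr (u := x) (p := [::])).
Qed.

End Struct.

Section Final.
Variables (V : finType) (e : rel V).
Hypothesis eirr : irreflexive e.
Hypothesis esy : symmetric e.
Hypothesis nocyc : ~ has_cycle e.

Lemma LO_proper (u u' w : V) p p' :
  (forall x, x \in u :: p -> x \in u' :: p') -> w \in u' :: p' -> w \notin u :: p ->
  loops_off u' p' \proper loops_off u p.
Proof.
move=> sub wq' wq; apply/properP; split.
  apply/subsetP => f; rewrite !LO_mem => /existsP[x /andP[xn fx]].
  apply/existsP; exists x; rewrite fx andbT.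
  by apply: contra xn; apply: sub.
exists [set w]; first by rewrite LO_mem; apply/existsP; exists w; rewrite wq eqxx.
rewrite LO_mem; apply/existsP => -[x /andP[xn /eqP /set1_inj wx]].
by move: xn; rewrite -wx wq'.
Qed.

Lemma leaf_end (u u' : V) p' : leaf e u -> u \in u' :: p' -> path e u' p' ->
  uniq (u' :: p') -> u = u' \/ u = last u' p'.
Proof.
move=> lu uq pp up.
case: (eqVneq u u') => [->|uu']; first by left.
have up' : u \in p' by move: uq; rewrite inE (negbTE uu').
case/splitPr: up' pp up => p1 p2.
case: p2 => [|h p3] pp up.
  by right; rewrite cats1 last_rcons.
exfalso.
move: pp; rewrite cat_path => /andP[_ /= /and3P[ea eh _]].
move/cards1P: lu => [y0 Hy].
have ha : last u' p1 \in [set y | e u y] by rewrite inE esy.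
have hh : h \in [set y | e u y] by rewrite inE.
move: ha hh; rewrite Hy !inE => /eqP ha /eqP hh.
move: up; rewrite -cat_cons cat_uniq => /and3P[_ /hasPn H _].
have := H h; rewrite !inE eqxx orbT => /(_ isT).
by rewrite hh -ha -in_cons mem_last.
Qed.

End Final.

Theorem proposition4p9 (V : finType) (e : rel V) :
  is_tree e -> 2 <= #|V| ->
  forall M : {set {set V}},
    V2star e (#|V| - 1) M <->
    exists (u v : V) (p : seq V),
      [/\ leaf e u, leaf e v, u != v, simple_path e u v p &
          M = path_edges u p :|: loops_off u p].
Proof.
move=> [[eirr esy] conn nocyc] n2 M.
have n0 : 0 < #|V| by lia.
split.
  case=> [[tm nomin] cM].
  have [u [p [pp up EM]]] := struct eirr esy nocyc tm cM n0.
  have cA : #|Aset u p| = #|V| - 1 by rewrite -EM.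
  have nbr_u : forall w, e u w -> w \in p /\ w = head u p.
    move=> w euw; case: (boolP (w \in u :: p)) => wq.
      have wp : w \in p by move: wq; rewrite inE => /orP[/eqP wu|//]; move: euw; rewrite wu eirr.
      by split => //; apply: (no_chord nocyc pp up wp); rewrite esy.
    exfalso; apply: nomin; exists (Aset w (u :: p)).
    have pw : path e w (u :: p) by rewrite /= esy euw pp.
    have uw : uniq (w :: u :: p) by rewrite cons_uniq wq up.
    split.
    - by have := A_tm eirr pw; apply.
    - by rewrite (A_card eirr pw uw) cM.
    - rewrite EM !(A_loops eirr) //; apply: (LO_proper (w := w)) => //.
        by move=> x xq; rewrite inE xq orbT.
      by rewrite inE eqxx.
  have [p'' [pp'' up'' lp'' sp'' ep'']] := rev_simple esy pp up.
  set v := last u p in pp'' up'' lp'' ep'' *.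
  have nbr_v : forall w, e v w -> w \in p'' /\ w = head v p''.
    move=> w evw; case: (boolP (w \in u :: p)) => wq.
      have wp : w \in p''.
        move: wq; rewrite -ep'' inE => /orP[/eqP wu|//]; by move: evw; rewrite wu eirr.
      by split => //; apply: (no_chord nocyc pp'' up'' wp); rewrite esy.
    exfalso; apply: nomin; exists (Aset u (rcons p w)).
    have pw : path e u (rcons p w) by rewrite rcons_path pp evw.
    have uw : uniq (u :: rcons p w) by rewrite -rcons_cons rcons_uniq wq up.
    split.
    - by have := A_tm eirr pw; apply.
    - by rewrite (A_card eirr pw uw) cM.
    - rewrite EM !(A_loops eirr) //; apply: (LO_proper (w := w)) => //.
        by move=> x; rewrite !inE mem_rcons inE => /orP[->|->]; rewrite ?orbT.
      by rewrite inE mem_rcons inE eqxx orbT.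
  have pn : p != [::].
    have [y yu] : exists y, y != u.
      apply: NNPP => H; have : #|V| <= 1.
        rewrite -(cards1 u); apply: subset_leq_card; apply/subsetP => y _.
        rewrite inE; apply: NNPP => /negP yu; apply: H; by exists y.
      lia.
    move: (conn u y) => /connectP[s ps ys].
    case: s ps ys => [_ yE|h s /= /andP[euh _] _]; first by move: yu; rewrite yE eqxx.
    by have [] := nbr_u h euh; case: (p).
  have uv : u != v.
    have vp : forall (s : seq V) x, s != [::] -> last x s \in s.
      by move=> [|h s] x //= _; exact: mem_last.
    move: up; rewrite cons_uniq => /andP[un _].
    by apply: contraNneq un => ->; exact: vp.
  exists u, v, p; split => //.
  - apply/cards1P; exists (head u p); apply/setP => y; rewrite !inE.
    apply/idP/eqP => [/nbr_u []//|->].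
    by case: (p) pn pp => [//|h p0] _ /= /andP[].
  - have pn'' : p'' != [::] by rewrite -size_eq0 sp'' size_eq0.
    apply/cards1P; exists (head v p''); apply/setP => y; rewrite !inE.
    apply/idP/eqP => [/nbr_v []//|->].
    by case: (p'') pn'' pp'' => [//|h p0] _ /= /andP[].
  - by rewrite /simple_path pp up eqxx.
case=> u [v [p [lu lv uv /and3P[pp /eqP lp up] EM]]].
have cA := A_card eirr pp up.
split; last by rewrite EM.
split; first by rewrite EM; by have := A_tm eirr pp; apply.
case=> M' [tm' cM' pr].
rewrite EM cA in cM'.
have [u' [p' [pp' up' EM']]] := struct eirr esy nocyc tm' cM' n0.
move: pr; rewrite EM EM' !(A_loops eirr) // => pr.
have sub : forall x, x \in u :: p -> x \in u' :: p'.
  move=> x xq; apply/negPn/negP => xn.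
  have : [set x] \in loops_off u' p'.
    by rewrite LO_mem; apply/existsP; exists x; rewrite xn eqxx.
  move/(subsetP (proper_sub pr)); rewrite LO_mem => /existsP[y /andP[yn /eqP /set1_inj xy]].
  by move: yn; rewrite -xy xq.
have [x0 x0q' x0q] : exists2 x0, x0 \in u' :: p' & x0 \notin u :: p.
  case/properP: pr => _ [f fL fL'].
  move: fL; rewrite LO_mem => /existsP[x0 /andP[x0n /eqP fx]].
  exists x0 => //; apply/negPn/negP => xn; apply/negP: fL'.
  by rewrite LO_mem negbK; apply/existsP; exists x0; rewrite xn fx eqxx.
have uq' : u \in u' :: p' by apply: sub; rewrite inE eqxx.
have vq' : v \in u' :: p' by apply: sub; rewrite -lp mem_last.
have [t' [pt' ut' lt' st' et']] := rev_simple esy pp' up'.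
case: (leaf_end esy lu uq' pp' up') => eu; case: (leaf_end esy lv vq' pp' up') => ev.
- by move: uv; rewrite eu ev eqxx.
- subst u; have := path_uniqT esy nocyc pp up pp' up'; rewrite lp ev => /(_ erefl) pE.
  by move: x0q; rewrite pE x0q'.
- have := path_uniqT esy nocyc pp up; rewrite eu => /(_ _ pt' ut').
  rewrite lt' -eu lp ev => /(_ erefl) pE.
  by move: x0q; rewrite eu pE et' x0q'.
- by move: uv; rewrite eu ev eqxx.
Qed.
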